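(* For every integer $m\ge 0$, \[ {}_{H}w_{m+1}(x)=w_{m+1}(x)+m\,x\,w_{m}(x)+(1+x)\sum_{k=0}^{m-2}\binom{m}{k}w_{m-k-1}(x)\,w_{k+1}(x) \] (empty sums being $0$). Moreover, for every integer $n\ge 2$, \[ \frac{x}{1+x}\sum_{k=0}^{n}\binom{n}{k}\,{}_{H}w_{k+1}(x)={}_{H}w_{n+1}(x)-{}_{H}w_{n}(x)-w_{n}(x)+w_{n-1}(x). \]
   Context: $\genfrac{\{}{\}}{0pt}{}{n}{k}$ denotes the Stirling numbers of the second kind. The geometric polynomials are $w_n(x)=\sum_{k=0}^{n}\genfrac{\{}{\}}{0pt}{}{n}{k}k!\,x^k$. With $H_k=\sum_{i=1}^k 1/i$, the harmonic geometric polynomials are ${}_{H}w_n(x)=\sum_{k=1}^{n}\genfrac{\{}{\}}{0pt}{}{n}{k}k!\,H_k\,x^k$. *)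

(* Defs.v *)
From HB Require Import structures.
From mathcomp Require Import all_boot all_order all_algebra.
Unset Implicit Arguments. Unset Printing Implicit Defensive.
Import Order.TTheory GRing.Theory Num.Theory.
Local Open Scope ring_scope.

Fixpoint stirling2 (n k : nat) : nat :=
  match n, k with
  | 0, 0 => 1
  | 0, _.+1 => 0
  | _.+1, 0 => 0
  | n'.+1, k'.+1 => k'.+1 * stirling2 n' k'.+1 + stirling2 n' k'
  end%N.

Definition harmonic (R : numFieldType) (k : nat) : R :=
  \sum_(1 <= i < k.+1) (i%:R)^-1.

Definition geom_poly {R : numFieldType} (n : nat) (x : R) : R :=
  \sum_(0 <= k < n.+1) ((stirling2 n k * k`!)%N)%:R * x ^+ k.

Definition harm_geom_poly {R : numFieldType} (n : nat) (x : R) : R :=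
  \sum_(1 <= k < n.+1) ((stirling2 n k * k`!)%N)%:R * harmonic R k * x ^+ k.

(* Main.v *)
Require Import Defs.
From HB Require Import structures.
From mathcomp Require Import all_boot all_order all_algebra.
From mathcomp Require Import ring zify.
Import Order.TTheory GRing.Theory Num.Theory.
Local Open Scope ring_scope.

Lemma stirling2_gt (n k : nat) : (n < k)%N -> stirling2 n k = 0%N.
Proof.
elim: n k => [|n IH] [|k] //= H.
rewrite ltnS in H; rewrite !IH //; lia.
Qed.

Definition Dp {R : numFieldType} (p : {poly R}) : {poly R} := 'X * ((1 + 'X) * p^`()).
Definition Ep {R : numFieldType} (a p : {poly R}) : {poly R} := Dp p + a * p.
Fixpoint Wp {R : numFieldType} (n : nat) : {poly R} :=
  match n with 0 => 1 | n'.+1 => Ep 'X (Wp n') end.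
Fixpoint HWp {R : numFieldType} (n : nat) : {poly R} :=
  match n with 0 => 0 | n'.+1 => Ep 'X (HWp n') + 'X * Wp n' end.

Lemma WpS {R : numFieldType} n : @Wp R n.+1 = Ep 'X (Wp n).
Proof. by []. Qed.
Lemma HWpS {R : numFieldType} n : @HWp R n.+1 = Ep 'X (HWp n) + 'X * Wp n.
Proof. by []. Qed.

Lemma coef_Dp0 {R : numFieldType} (p : {poly R}) : (Dp p)`_0 = 0.
Proof. by rewrite /Dp coefXM. Qed.

Lemma coef_DpS {R : numFieldType} (p : {poly R}) k :
  (Dp p)`_k.+1 = p`_k.+1 *+ k.+1 + p`_k *+ k.
Proof.
rewrite /Dp coefXM /= mulrDl mul1r coefD coefXM !coef_deriv.
by case: k => [|k] //=; rewrite !mulr0n addr0.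
Qed.

Definition acoef (n k : nat) : nat := (stirling2 n k * k`!)%N.

Arguments acoef : simpl never.

Lemma coefXMS {R : numFieldType} (p : {poly R}) k : ('X * p)`_k.+1 = p`_k.
Proof. by rewrite coefXM. Qed.

Lemma acoefS n k : acoef n.+1 k.+1 = (k.+1 * (acoef n k.+1 + acoef n k))%N.
Proof. rewrite /acoef /= factS. nia. Qed.

Lemma acoef0 n : acoef n.+1 0 = 0%N.
Proof. by []. Qed.

Lemma coef_Wp {R : numFieldType} n k : (@Wp R n)`_k = (acoef n k)%:R.
Proof.
elim: n k => [|n IH] [|k].
- by rewrite coef1.
- by rewrite coef1 /acoef [stirling2 0 _]/= mul0n.
- by rewrite WpS /Ep coefD coef_Dp0 coefXM add0r acoef0.
rewrite WpS /Ep coefD coef_DpS coefXMS !IH acoefS.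
move: (acoef n k.+1) (acoef n k) => a b.
rewrite natrM natrD; ring.
Qed.

Lemma harmonicS {R : numFieldType} k : harmonic R k.+1 = harmonic R k + (k.+1%:R)^-1.
Proof. by rewrite /harmonic big_nat_recr. Qed.

Lemma harmonic0 {R : numFieldType} : harmonic R 0 = 0.
Proof. by rewrite /harmonic big_geq. Qed.

Lemma coef_HWp {R : numFieldType} n k : (@HWp R n)`_k = (acoef n k)%:R * harmonic R k.
Proof.
elim: n k => [|n IH] [|k].
- by rewrite coef0 harmonic0 mulr0.
- by rewrite coef0 /acoef [stirling2 0 _]/= mul0n mul0r.
- by rewrite HWpS /Ep !coefD coef_Dp0 !coefXM harmonic0 !mulr0 !addr0.
rewrite HWpS /Ep !coefD coef_DpS !coefXMS !IH coef_Wp acoefS harmonicS.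
move: (acoef n k.+1) (acoef n k) (harmonic R k) => a b h.
rewrite natrM natrD.
have hk : (k.+1%:R : R) != 0 by rewrite pnatr_eq0.
rewrite -natr1 in hk *.
field. exact: hk.
Qed.

Lemma size_Wp {R : numFieldType} n : (size (@Wp R n) <= n.+1)%N.
Proof.
apply/leq_sizeP => j Hj; by rewrite coef_Wp /acoef stirling2_gt.
Qed.

Lemma size_HWp {R : numFieldType} n : (size (@HWp R n) <= n.+1)%N.
Proof.
apply/leq_sizeP => j Hj; by rewrite coef_HWp /acoef stirling2_gt // mul0r.
Qed.

Lemma geomE {R : numFieldType} n (x : R) : geom_poly n x = (Wp n).[x].
Proof.
rewrite (horner_coef_wide x (size_Wp n)) /geom_poly big_mkord.
by apply: eq_bigr => i _; rewrite coef_Wp.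
Qed.

Lemma hgeomE {R : numFieldType} n (x : R) : harm_geom_poly n x = (HWp n).[x].
Proof.
rewrite (horner_coef_wide x (size_HWp n)) /harm_geom_poly.
rewrite [RHS](big_ord_recl) coef_HWp harmonic0 mulr0 mul0r add0r.
rewrite big_add1 /= big_mkord.
by apply: eq_bigr => i _; rewrite coef_HWp.
Qed.

Lemma D_add {R : numFieldType} (p q : {poly R}) : Dp (p + q) = Dp p + Dp q.
Proof. by rewrite /Dp derivD !mulrDr. Qed.
Lemma D_sub {R : numFieldType} (p q : {poly R}) : Dp (p - q) = Dp p - Dp q.
Proof. by rewrite /Dp derivB !mulrBr. Qed.
Lemma D_0 {R : numFieldType} : Dp (0 : {poly R}) = 0.
Proof. by rewrite /Dp deriv0 !mulr0. Qed.
Lemma D_1 {R : numFieldType} : Dp (1 : {poly R}) = 0.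
Proof. by rewrite /Dp -polyC1 derivC !mulr0. Qed.
Lemma D_nat {R : numFieldType} n : Dp (n%:R : {poly R}) = 0.
Proof. by rewrite /Dp -polyC_natr derivC !mulr0. Qed.
Lemma D_mul {R : numFieldType} (p q : {poly R}) : Dp (p * q) = Dp p * q + p * Dp q.
Proof. rewrite /Dp derivM. ring. Qed.
Lemma D_X {R : numFieldType} : Dp ('X : {poly R}) = 'X * (1 + 'X).
Proof. by rewrite /Dp derivX mulr1. Qed.
Lemma D_sum {R : numFieldType} m n (F : nat -> {poly R}) :
  Dp (\sum_(m <= k < n) F k) = \sum_(m <= k < n) Dp (F k).
Proof. exact: (big_morph Dp D_add D_0). Qed.

Lemma E_add {R : numFieldType} (a p q : {poly R}) : Ep a (p + q) = Ep a p + Ep a q.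
Proof. rewrite /Ep D_add; ring. Qed.
Lemma E_sub {R : numFieldType} (a p q : {poly R}) : Ep a (p - q) = Ep a p - Ep a q.
Proof. rewrite /Ep D_sub; ring. Qed.
Lemma E_0 {R : numFieldType} (a : {poly R}) : Ep a 0 = 0.
Proof. by rewrite /Ep D_0 mulr0 addr0. Qed.
Lemma E_natM {R : numFieldType} (a p : {poly R}) n : Ep a (n%:R * p) = n%:R * Ep a p.
Proof. rewrite /Ep D_mul D_nat; ring. Qed.
Lemma E_1X {R : numFieldType} (p : {poly R}) :
  Ep 'X ((1 + 'X) * p) = (1 + 'X) * Ep ('X + 'X) p.
Proof. rewrite /Ep D_mul D_add D_1 D_X; ring. Qed.
Lemma XE {R : numFieldType} (p : {poly R}) : 'X * Ep (1 + 'X) p = Dp ('X * p).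
Proof. rewrite /Ep D_mul D_X; ring. Qed.
Lemma D1X {R : numFieldType} (p : {poly R}) : Dp ((1 + 'X) * p) = (1 + 'X) * Ep 'X p.
Proof. rewrite /Ep D_mul D_add D_1 D_X; ring. Qed.

Definition conv {R : numFieldType} (f g : nat -> {poly R}) n :=
  \sum_(0 <= k < n.+1) 'C(n, k)%:R * f (n - k)%N * g k.

Lemma pascal {R : numFieldType} (f g : nat -> {poly R}) n :
  conv f g n.+1 = \sum_(0 <= k < n.+1) 'C(n, k)%:R * (f (n.+1 - k)%N * g k + f (n - k)%N * g k.+1).
Proof.
rewrite /conv big_nat_recl // bin0 subn0.
under eq_big_nat => i _ do rewrite binS natrD subSS mulrDl mulrDl.
rewrite big_split /= addrA.
under [X in _ = X]eq_big_nat => i _ do rewrite mulrDr.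
rewrite big_split /=; congr (_ + _); last by apply: eq_bigr => i _; rewrite mulrA.
rewrite big_nat_recr //= bin_small // mul0r mul0r addr0.
rewrite [RHS]big_nat_recl // bin0 subn0 !mul1r.
congr (_ + _); apply: eq_bigr => i _; by rewrite subSS mulrA.
Qed.

Lemma leibniz {R : numFieldType} (f g e : nat -> {poly R}) (a b : {poly R}) n :
  (forall i, f i.+1 = Ep a (f i)) -> (forall k, g k.+1 = Ep b (g k) + e k) ->
  conv f g n.+1 = Ep (a + b) (conv f g n)
                  + \sum_(0 <= k < n.+1) 'C(n, k)%:R * f (n - k)%N * e k.
Proof.
move=> hf hg.
rewrite pascal /conv /Ep D_sum mulr_sumr -!big_split /=.
apply: eq_big_nat => k /andP[_ hk].
rewrite subSn // hf hg /Ep !D_mul D_nat; ring.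
Qed.

Lemma WpS' {R : numFieldType} n : Ep 'X (@Wp R n) = Wp n.+1.
Proof. by []. Qed.

Lemma Wp0 {R : numFieldType} : @Wp R 0 = 1. Proof. by []. Qed.
Lemma Wp1 {R : numFieldType} : @Wp R 1 = 'X.
Proof. by rewrite WpS /Ep D_1 mulr1 add0r. Qed.

Definition Pc {R : numFieldType} n := conv (@Wp R) (@Wp R) n.

Lemma Pc_rec {R : numFieldType} n : @Pc R n.+1 = Ep ('X + 'X) (Pc n).
Proof.
rewrite /Pc (@leibniz R _ _ (fun _ => 0) 'X 'X) //.
  by rewrite big1 ?addr0 // => i _; rewrite mulr0.
by move=> k; rewrite addr0.
Qed.

Lemma Pc_id {R : numFieldType} m : (1 + 'X) * @Pc R m = Wp m.+1 + Wp m.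
Proof.
elim: m => [|m IH].
  rewrite /Pc /conv big_nat1 bin0 subn0 Wp1 Wp0; ring.
by rewrite Pc_rec -E_1X IH E_add !WpS'.
Qed.

Definition Gs {R : numFieldType} (k : nat) : {poly R} :=
  if k is k'.+1 then Wp k' else 0.
Definition Qc {R : numFieldType} n := conv (@Wp R) Gs n.

Lemma Qc_rec {R : numFieldType} n : @Qc R n.+1 = Ep ('X + 'X) (Qc n) + Wp n.
Proof.
rewrite /Qc (@leibniz R _ _ (fun k => if k is 0 then 1 else 0) 'X 'X) //.
  rewrite big_nat_recl // big1 ?addr0 ?bin0 ?subn0 ?mulr1 ?mul1r //.
  by move=> i _; rewrite mulr0.
by case=> [|k] /=; rewrite ?E_0 ?add0r ?addr0.
Qed.

Lemma K_id {R : numFieldType} n : @HWp R n = (1 + 'X) * Qc n - n%:R * Wp n.-1.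
Proof.
elim: n => [|n IH].
  by rewrite /Qc /conv big_nat1 /= !mulr0 mul0r subr0.
rewrite HWpS IH E_sub E_1X E_natM Qc_rec.
have -> : n%:R * Ep 'X (@Wp R n.-1) = n%:R * Wp n.
  by case: n {IH} => [|n]; rewrite ?mul0r.
rewrite [n.+1.-1]/= -natr1; ring.
Qed.

Lemma Gs0 {R : numFieldType} : @Gs R 0 = 0. Proof. by []. Qed.
Lemma GsS {R : numFieldType} k : @Gs R k.+1 = Wp k. Proof. by []. Qed.

Lemma A_id {R : numFieldType} m :
  \sum_(0 <= k < m.+1) 'C(m, k)%:R * @Wp R (m.+1 - k)%N * Gs k =
  m%:R * Wp m + \sum_(0 <= k < m.-1) 'C(m, k)%:R * Wp (m - k - 1)%N * Wp k.+1.
Proof.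
rewrite big_nat_recl // Gs0 mulr0 add0r.
case: m => [|m]; first by rewrite !big_geq // mul0r addr0.
under eq_big_nat => i _ do rewrite GsS.
rewrite big_nat_recl // bin1 subn1 Wp0 mulr1 [m.+1.-1]/= [m.+2.-1]/=; congr (_ + _).
rewrite [RHS]big_nat_rev.
apply: eq_big_nat => i /andP[_ hi].
rewrite add0n.
have e1 : (m.+1 - (m - i.+1) - 1 = i.+1)%N by lia.
have e2 : ((m - i.+1).+1 = m - i)%N by lia.
have e3 : (m - i.+1 = m.+1 - i.+2)%N by lia.
rewrite !subSS e1 e2 e3 bin_sub //; ring.
Qed.

Lemma first_poly {R : numFieldType} m :
  @HWp R m.+1 = Wp m.+1 + m%:R * 'X * Wp m
     + (1 + 'X) * \sum_(0 <= k < m.-1) 'C(m, k)%:R * Wp (m - k - 1)%N * Wp k.+1.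
Proof.
rewrite K_id /Qc pascal.
under eq_big_nat => k _ do rewrite mulrDr.
rewrite big_split /=.
have -> : \sum_(0 <= i < m.+1) 'C(m, i)%:R * (Wp (m - i) * @Gs R i.+1) = Pc m.
  by apply: eq_bigr => i _; rewrite mulrA.
have -> : \sum_(0 <= i < m.+1) 'C(m, i)%:R * (@Wp R (m.+1 - i) * Gs i)
   = \sum_(0 <= k < m.+1) 'C(m, k)%:R * @Wp R (m.+1 - k)%N * Gs k.
  by apply: eq_bigr => i _; rewrite mulrA.
rewrite A_id mulrDr (Pc_id m) -natr1.
under [in RHS]eq_bigr => k _ do rewrite WpS'.
rewrite WpS'.
ring.
Qed.

Definition Vc {R : numFieldType} n := conv (fun _ => 1) (fun k => @Wp R k.+1) n.

Lemma Vc_rec {R : numFieldType} n : @Vc R n.+1 = Ep (1 + 'X) (Vc n).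
Proof.
rewrite /Vc (@leibniz R _ _ (fun _ => 0) 1 'X) //.
- by rewrite big1 ?addr0 // => i _; rewrite mulr0.
- by move=> i; rewrite /Ep D_1 mulr1 add0r.
- by move=> k; rewrite addr0.
Qed.

Lemma V_id {R : numFieldType} n : 'X * @Vc R n.+1 = (1 + 'X) * (Wp n.+2 - Wp n.+1).
Proof.
elim: n => [|n IH].
  rewrite Vc_rec /Vc /conv big_nat1 bin0 mulr1 mul1r (WpS 1) Wp1 /Ep D_X; ring.
rewrite Vc_rec XE IH D1X E_sub !WpS' //.
Qed.

Definition Sc {R : numFieldType} n := conv (fun _ => 1) (fun k => @HWp R k.+1) n.

Lemma Sc_rec {R : numFieldType} n : @Sc R n.+1 = Ep (1 + 'X) (Sc n) + 'X * Vc n.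
Proof.
rewrite /Sc (@leibniz R _ _ (fun k => 'X * Wp k.+1) 1 'X) //.
- rewrite /Vc /conv mulr_sumr; congr (_ + _); apply: eq_bigr => i _; ring.
- by move=> i; rewrite /Ep D_1 mulr1 add0r.
Qed.

Definition Rn {R : numFieldType} n : {poly R} :=
  (1 + 'X) * (HWp n.+1 - HWp n - Wp n + Wp n.-1).

Lemma S_step {R : numFieldType} n (c : {poly R}) : Dp c = 0 ->
  'X * @Sc R n.+1 = Rn n.+1 - c -> 'X * @Sc R n.+2 = Rn n.+2.
Proof.
move=> hc IH.
rewrite Sc_rec mulrDr XE IH D_sub hc subr0 V_id /Rn D1X E_add E_sub E_sub.
have h1 : forall k, Ep 'X (@HWp R k) = HWp k.+1 - 'X * Wp k.
  by move=> k; rewrite HWpS addrK.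
rewrite !h1 !WpS' -[n.+2.-1]/(n.+1) -[n.+1.-1]/n.
ring.
Qed.

Lemma HWp1 {R : numFieldType} : @HWp R 1 = 'X.
Proof. by rewrite HWpS E_0 Wp0 mulr1 add0r. Qed.

Lemma S_base {R : numFieldType} : 'X * @Sc R 1 = Rn 1 - 1.
Proof.
rewrite /Sc /conv /Rn big_nat_recr // big_nat1 /=.
rewrite bin0 binn !E_0 !add0r !mulr1 /Ep D_1 D_X; ring.
Qed.

Lemma S_id {R : numFieldType} n : 'X * @Sc R n.+2 = Rn n.+2.
Proof.
elim: n => [|n IH].
  exact: (@S_step R 0 1 D_1 S_base).
apply: (@S_step R n.+1 0 D_0); by rewrite subr0.
Qed.

Lemma horner_nat {R : numFieldType} n (x : R) : (n%:R : {poly R}).[x] = n%:R.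
Proof. by rewrite -polyC_natr hornerC. Qed.

Theorem proposition3 (R : numFieldType) (x : R) :
  (forall m : nat,
     harm_geom_poly m.+1 x =
       geom_poly m.+1 x + m%:R * x * geom_poly m x
       + (1 + x) * \sum_(0 <= k < m.-1)
                     'C(m, k)%:R * geom_poly (m - k - 1) x * geom_poly k.+1 x)
  /\
  (1 + x != 0 ->
   forall n : nat, (2 <= n)%N ->
     x / (1 + x) * \sum_(0 <= k < n.+1) 'C(n, k)%:R * harm_geom_poly k.+1 x =
       harm_geom_poly n.+1 x - harm_geom_poly n x
       - geom_poly n x + geom_poly n.-1 x).
Proof.
split.
  move=> m.
  under eq_bigr => k _ do rewrite !geomE.
  rewrite hgeomE !geomE first_poly !(hornerD, hornerM, hornerX, hornerC, horner_nat) horner_sum.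
  congr (_ + _ * _); apply: eq_bigr => k _.
  by rewrite !hornerM horner_nat.
move=> hx n hn.
case: n hn => [|[|n]] // _.
have hS : (@Sc R n.+2).[x] = \sum_(0 <= k < n.+3) 'C(n.+2, k)%:R * harm_geom_poly k.+1 x.
  rewrite /Sc /conv horner_sum; apply: eq_bigr => k _.
  by rewrite hgeomE hornerM hornerM horner_nat hornerC mulr1.
rewrite -hS !hgeomE !geomE -[n.+2.-1]/(n.+1).
have h := @S_id R n; rewrite /Rn -[n.+2.-1]/(n.+1) in h.
move: h; move: (@HWp R n.+3) (@HWp R n.+2) (@Wp R n.+2) (@Wp R n.+1) (@Sc R n.+2) => a b c d s h.
have := congr1 (fun p => p.[x]) h.
rewrite !(hornerD, hornerN, hornerM, hornerX, hornerC) => {}h.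
apply: (mulfI hx).
rewrite -h.
field; exact: hx.
Qed.
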